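(* Assume $L$ is irreducible and $p\gg0$. Let $\theta\gg0$ with $L\theta=0$ and $\sum_i\theta_i=1$. Then there exist constants $0<m\le M$ such that $m\theta\le w^*(\mu,p)\le M\theta$ for all $\mu>0$; moreover $$\lim_{\mu\to0^+}w^*(\mu,p)=p\qquad\text{and}\qquad\lim_{\mu\to\infty}w^*(\mu,p)=\frac{\sum_{i=1}^n\theta_ip_i}{\sum_{i=1}^n\theta_i^2}\,\theta .$$
   Context: Let $n\ge2$ and $A=(a_{ij})_{n\times n}$ with $a_{ij}\ge0$ for $i\ne j$. The connection matrix $L$ has $L_{ij}=a_{ij}$ for $i\ne j$, $L_{ii}=-\sum_{k\ne i}a_{ki}$. For $\mu>0$ and $r\gg0$, $w^*(\mu,r)\gg0$ denotes the unique positive equilibrium of the single-species patch model $w_i'=\mu\sum_{j=1}^nL_{ij}w_j+w_i(r_i-w_i)$, $i=1,\dots,n$ (it exists and is globally asymptotically stable in $\mathbb R^n_+\setminus\{0\}$ when $L$ is irreducible). Inequalities between vectors are componentwise. *)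

(* Defs.v *)
From HB Require Import structures.
From mathcomp Require Import all_boot all_order all_algebra.
From mathcomp Require Import all_classical all_reals all_analysis.
Set Implicit Arguments. Unset Strict Implicit. Unset Printing Implicit Defensive.
Import Order.TTheory GRing.Theory Num.Theory.
Local Open Scope ring_scope.

Definition connection_matrix (R : realType) (n : nat) (A : 'M[R]_n) : 'M[R]_n :=
  \matrix_(i, j) (if i == j then - \sum_(k < n | k != i) A k i else A i j).

Definition irreducible_mx (R : realType) (n : nat) (L : 'M[R]_n) : Prop :=
  forall i j : 'I_n, connect [rel k l | (k != l) && (L k l != 0)] i j.

(* w is a positive equilibrium of w_i' = mu sum_j L_ij w_j + w_i (r_i - w_i). *)
Definition is_pos_equilibrium (R : realType) (n : nat) (L : 'M[R]_n)
    (mu : R) (r w : 'I_n -> R) : Prop :=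
  (forall i, 0 < w i) /\
  (forall i, mu * (\sum_j L i j * w j) + w i * (r i - w i) = 0).

(* Main.v *)
Require Import Defs.
From HB Require Import structures.
From mathcomp Require Import all_boot all_order all_algebra.
From mathcomp Require Import all_classical all_reals all_analysis.
From mathcomp Require Import ring lra.
Import Order.TTheory GRing.Theory Num.Theory.
Import numFieldNormedType.Exports.
Local Open Scope classical_set_scope.
Local Open Scope ring_scope.

Set Implicit Arguments.
Section Alg.
Variables (R : realType) (n : nat) (A : 'M[R]_n).
Local Notation L := (connection_matrix A).

Lemma L_off i j : i != j -> L i j = A i j.
Proof. by move=> ij; rewrite mxE (negbTE ij). Qed.

Lemma L_diag i : L i i = - \sum_(k < n | k != i) A k i.
Proof. by rewrite mxE eqxx. Qed.

Lemma colsum0 j : \sum_i L i j = 0.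
Proof.
rewrite (bigD1 j) //= L_diag.
rewrite (eq_bigr (fun i => A i j)); last by move=> i ij; rewrite L_off.
by rewrite addNr.
Qed.

Lemma Lsum0 (w : 'I_n -> R) : \sum_i \sum_j L i j * w j = 0.
Proof.
rewrite exchange_big /=.
rewrite (eq_bigr (fun j => (\sum_i L i j) * w j)); last by move=> j _; rewrite mulr_suml.
by rewrite big1 // => j _; rewrite colsum0 mul0r.
Qed.

Lemma quad (th u : 'I_n -> R) : (forall i, \sum_j L i j * th j = 0) ->
  \sum_i \sum_j L i j * th j * (u i - u j) ^+ 2 =
  - 2 * \sum_i u i * (\sum_j L i j * (th j * u j)).
Proof.
move=> hth.
have e : forall i j, L i j * th j * (u i - u j) ^+ 2 =
   L i j * th j * u i ^+ 2 + L i j * (th j * u j ^+ 2) - 2 * (u i * (L i j * (th j * u j))).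
  by move=> i j; ring.
under eq_bigr do under eq_bigr do rewrite e.
under eq_bigr do rewrite big_split /= big_split /= sumrN.
rewrite big_split /= big_split /= sumrN Lsum0 addr0.
rewrite big1; last by move=> i _; rewrite -mulr_suml hth mul0r.
rewrite add0r mulNr; congr (- _).
rewrite mulr_sumr; apply: eq_bigr => i _; rewrite -mulr_sumr -mulr_sumr.
by [].
Qed.
Lemma sum_ge1 (F : 'I_n -> R) k : (forall j, 0 <= F j) -> F k <= \sum_j F j.
Proof.
move=> F0; rewrite (bigD1 k) //= lerDl; exact: sumr_ge0.
Qed.

Lemma upper (th p w : 'I_n -> R) mu :
  (forall i j, i != j -> 0 <= A i j) -> (forall i, 0 < th i) -> (forall i, 0 < p i) ->
  (forall i, \sum_j L i j * th j = 0) -> 0 < mu -> is_pos_equilibrium L mu p w ->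
  forall i, w i <= (\sum_j p j / th j) * th i.
Proof.
move=> A0 th0 p0 hth mu0 [w0 eq] i.
case: (@arg_maxP _ _ _ i predT (fun k => w k / th k)) => // i0 _ hmax.
set U := w i0 / th i0.
have hS : \sum_j L i0 j * w j <= 0.
  apply: (@le_trans _ _ (\sum_j L i0 j * th j * U)); last by rewrite -mulr_suml hth mul0r.
  apply: ler_sum => j _.
  case: (eqVneq j i0) => [->|ji].
    by rewrite /U -mulrA [th i0 * _]mulrC mulfVK // gt_eqF.
  rewrite -mulrA; apply: ler_wpM2l; first by rewrite L_off 1?eq_sym // A0 // eq_sym.
  by rewrite -ler_pdivrMl // mulrC; apply: hmax.
have hp : w i0 <= p i0.
  have : 0 <= w i0 * (p i0 - w i0).
    have -> : w i0 * (p i0 - w i0) = - (mu * \sum_j L i0 j * w j).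
      by apply/eqP; rewrite -subr_eq0 opprK addrC eq.
    by rewrite oppr_ge0 pmulr_rle0.
  by rewrite pmulr_rge0 // subr_ge0.
have hU : U <= \sum_j p j / th j.
  apply: le_trans (sum_ge1 _ i0 _); last by move=> j; rewrite divr_ge0 // ltW.
  by rewrite ler_pM2r ?invr_gt0.
rewrite -ler_pdivrMr //; apply: le_trans hU; exact: hmax.
Qed.

Lemma lower (th p w : 'I_n -> R) mu :
  (forall i j, i != j -> 0 <= A i j) -> (forall i, 0 < th i) -> (forall i, 0 < p i) ->
  (forall i, \sum_j L i j * th j = 0) -> 0 < mu -> is_pos_equilibrium L mu p w ->
  forall i, (\sum_j th j / p j)^-1 * th i <= w i.
Proof.
move=> A0 th0 p0 hth mu0 [w0 eq] i.
case: (@arg_minP _ _ _ i predT (fun k => w k / th k)) => // i0 _ hmin.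
set U := w i0 / th i0.
have hS : 0 <= \sum_j L i0 j * w j.
  apply: (@le_trans _ _ (\sum_j L i0 j * th j * U)); first by rewrite -mulr_suml hth mul0r.
  apply: ler_sum => j _.
  case: (eqVneq j i0) => [->|ji].
    by rewrite /U -mulrA [th i0 * _]mulrC mulfVK // gt_eqF.
  rewrite -mulrA; apply: ler_wpM2l; first by rewrite L_off 1?eq_sym // A0 // eq_sym.
  by rewrite -ler_pdivlMl // mulrC; apply: hmin.
have hp : p i0 <= w i0.
  have : w i0 * (p i0 - w i0) <= 0.
    have -> : w i0 * (p i0 - w i0) = - (mu * \sum_j L i0 j * w j).
      by apply/eqP; rewrite -subr_eq0 opprK addrC eq.
    by rewrite oppr_le0 pmulr_rge0.
  by rewrite pmulr_rle0 // subr_le0.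
have hU : (\sum_j th j / p j)^-1 <= U.
  apply: (@le_trans _ _ (p i0 / th i0)); last by rewrite ler_pM2r ?invr_gt0.
  rewrite -invf_div lef_pV2 ?posrE ?divr_gt0 //; last first.
    by apply: lt_le_trans (sum_ge1 _ i0 _) => [|j]; rewrite ?divr_gt0 // ltW ?divr_gt0.
  apply: sum_ge1 => j; rewrite divr_ge0 // ltW //.
rewrite -ler_pdivlMr //; apply: le_trans hU _; exact: hmin.
Qed.
End Alg.

Section An.
Variable R : realType.

Lemma cvg_bound {T} {F : set_system T} {FF : Filter F} (f g : T -> R) (l : R) :
  g @ F --> 0 -> (\forall x \near F, `|l - f x| <= g x) -> f @ F --> l.
Proof.
move=> g0 hb; apply/cvgrPdist_le => e e0.
near=> x.
have h1 : `|l - f x| <= g x by near: x.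
have h2 : `|g x| <= e by near: x; exact: cvgr0_norm_le.
exact: le_trans h1 (le_trans (ler_norm _) h2).
Unshelve. all: by end_near. Qed.

Lemma sum_cvg0 {T} {F : set_system T} {FF : Filter F} (I : finType) (f : I -> T -> R) :
  (forall i, f i @ F --> 0) -> (\sum_i f i x) @[x --> F] --> 0.
Proof.
move=> h.
have := @cvg_big R I +%R 0 predT add_continuous T F (index_enum I) f (fun=> 0) FF (fun i _ => h i).
by rewrite big1.
Qed.

Lemma sq_cvg0 (f : R -> R) K : (forall mu, 0 < mu -> mu * f mu ^+ 2 <= K) ->
  f x @[x --> +oo] --> 0.
Proof.
move=> hK; apply/cvgrPdist_le => e e0.
near=> mu.
have mu0 : 0 < mu by near: mu; apply: nbhs_pinfty_gt; rewrite num_real.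
have muK : `|K| / e ^+ 2 < mu by near: mu; apply: nbhs_pinfty_gt; rewrite num_real.
rewrite sub0r normrN.
have h1 := hK mu mu0.
have h2 : `|K| < mu * e ^+ 2 by rewrite -ltr_pdivrMr ?exprn_gt0.
have h3 : K <= `|K| := ler_norm K.
have h4 : f mu ^+ 2 = `|f mu| ^+ 2 by rewrite real_normK ?num_real.
rewrite h4 in h1.
have h5 : 0 <= `|f mu| := normr_ge0 _.
rewrite leNgt; apply/negP => h6.
have h7 : e ^+ 2 < `|f mu| ^+ 2 by nra.
have : mu * e ^+ 2 < mu * `|f mu| ^+ 2 by rewrite ltr_pM2l.
lra.
Unshelve. all: by end_near. Qed.
End An.

Unset Implicit Arguments.
Theorem mainTheorem10 (R : realType) (n : nat) (A : 'M[R]_n)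
    (p theta : 'I_n -> R) (wstar : R -> 'I_n -> R) :
  (2 <= n)%N ->
  (forall i j, i != j -> 0 <= A i j) ->
  irreducible_mx (connection_matrix A) ->
  (forall i, 0 < p i) ->
  (forall i, 0 < theta i) ->
  (forall i, \sum_j connection_matrix A i j * theta j = 0) ->
  \sum_i theta i = 1 ->
  (forall mu, 0 < mu -> is_pos_equilibrium (connection_matrix A) mu p (wstar mu)) ->
  (exists m M : R, 0 < m /\ m <= M /\
     forall mu, 0 < mu -> forall i, m * theta i <= wstar mu i <= M * theta i) /\
  (forall i, wstar mu i @[mu --> 0^'+] --> p i) /\
  (forall i, wstar mu i @[mu --> +oo] -->
      ((\sum_j theta j * p j) / (\sum_j theta j ^+ 2)) * theta i).
Proof.
move=> n2 A0 irr p0 th0 hth _ heq.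
set L := connection_matrix A.
set M0 := \sum_j p j / theta j.
set m0 := (\sum_j theta j / p j)^-1.
have ub : forall mu, 0 < mu -> forall i, wstar mu i <= M0 * theta i.
  by move=> mu mu0; apply: (@upper R n A theta p (wstar mu) mu A0 th0 p0 hth mu0 (heq _ mu0)).
have lb : forall mu, 0 < mu -> forall i, m0 * theta i <= wstar mu i.
  by move=> mu mu0; apply: (@lower R n A theta p (wstar mu) mu A0 th0 p0 hth mu0 (heq _ mu0)).
have k : 'I_n by exists 0%N; apply: leq_trans n2.
have m0_gt0 : 0 < m0.
  rewrite invr_gt0; apply: lt_le_trans (sum_ge1 _ _ k _); first by rewrite divr_gt0.
  by move=> j; rewrite ltW // divr_gt0.
have m0M0 : m0 <= M0.
  have h := le_trans (lb 1 ltr01 k) (ub 1 ltr01 k).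
  by rewrite ler_pM2r in h.
have wpos : forall mu, 0 < mu -> forall i, 0 < wstar mu i.
  by move=> mu mu0 i; case: (heq mu mu0) => + _; apply.
have weq : forall mu, 0 < mu -> forall i,
    wstar mu i * (p i - wstar mu i) = - (mu * \sum_j L i j * wstar mu j).
  move=> mu mu0 i; case: (heq mu mu0) => _ /(_ i) e.
  by apply/eqP; rewrite -subr_eq0 opprK addrC e.
split; first by exists m0, M0; do 2 split => //; move=> mu mu0 i; rewrite lb ?ub.
split.
  move=> i.
  set C := (\sum_j `|L i j| * (M0 * theta j)) / (m0 * theta i).
  apply: (@cvg_bound _ _ _ _ _ (fun mu => mu * C)).
    have h : (fun mu => mu * C) @ 0 --> 0 * C by apply: cvgMr_tmp; exact: cvg_id.
    rewrite mul0r in h; exact: cvg_at_right_filter h.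
  near=> mu.
  have mu0 : 0 < mu by near: mu; exact: nbhs_right_gt.
  set w := wstar mu.
  have hS : `|\sum_j L i j * w j| <= \sum_j `|L i j| * (M0 * theta j).
    apply: le_trans (ler_norm_sum _ _ _) _; apply: ler_sum => j _.
    rewrite normrM ler_wpM2l // ger0_norm; [exact: ub mu mu0 j | exact: ltW (wpos mu mu0 j)].
  have e := weq mu mu0 i.
  have e2 : `|p i - w i| * w i = mu * `|\sum_j L i j * w j|.
    have wi : 0 < w i by exact: wpos mu mu0 i.
    have : `|(p i - w i) * w i| = `|mu * \sum_j L i j * w j| by rewrite mulrC e normrN.
    by rewrite !normrM (gtr0_norm wi) (gtr0_norm mu0).
  rewrite /C mulrA ler_pdivlMr ?mulr_gt0 //.
  apply: le_trans (_ : _ <= `|p i - w i| * w i) _.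
    by rewrite ler_wpM2l // lb.
  by rewrite e2 ler_wpM2l // ltW.
pose u := fun mu j => wstar mu j / theta j.
have tu : forall mu j, theta j * u mu j = wstar mu j.
  by move=> mu j; rewrite /u mulrC mulfVK // gt_eqF.
have ub' : forall mu, 0 < mu -> forall j, u mu j <= M0.
  by move=> mu mu0 j; rewrite /u ler_pdivrMr //; exact: ub.
have lb' : forall mu, 0 < mu -> forall j, m0 <= u mu j.
  by move=> mu mu0 j; rewrite /u ler_pdivlMr //; exact: lb.
have uge0 : forall mu, 0 < mu -> forall j, 0 <= u mu j.
  by move=> mu mu0 j; apply: le_trans (lb' mu mu0 j); exact: ltW.
set K0 := \sum_i M0 * (M0 * theta i) * p i.
have Qeq : forall mu, 0 < mu ->
   mu * (\sum_i \sum_j L i j * theta j * (u mu i - u mu j) ^+ 2) =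
   2 * \sum_i u mu i * (wstar mu i * (p i - wstar mu i)).
  move=> mu mu0; rewrite quad //.
  under eq_bigr do under eq_bigr do rewrite tu.
  rewrite mulrCA mulNr -mulrN; congr (_ * _).
  rewrite mulr_sumr -sumrN; apply: eq_bigr => i _.
  by rewrite weq // mulrN mulrCA.
have Qle : forall mu, 0 < mu ->
   mu * (\sum_i \sum_j L i j * theta j * (u mu i - u mu j) ^+ 2) <= 2 * K0.
  move=> mu mu0; rewrite Qeq // ler_pM2l // /K0; apply: ler_sum => i _.
  have wi := wpos mu mu0 i.
  apply: (@le_trans _ _ (u mu i * (wstar mu i * p i))).
    rewrite ler_wpM2l ?uge0 // ler_wpM2l //; [exact: ltW | by rewrite gerBl ltW].
  rewrite -mulrA; apply: ler_pM; rewrite ?uge0 ?ub' //.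
    by rewrite mulr_ge0 // ltW.
  by rewrite ler_pM2r // ub.
have tnn : forall mu i j, 0 <= L i j * theta j * (u mu i - u mu j) ^+ 2.
  move=> mu i j; case: (eqVneq i j) => [->|ij]; first by rewrite subrr expr0n /= mulr0.
  rewrite mulr_ge0 ?sqr_ge0 // mulr_ge0 //; last exact: ltW.
  by rewrite /L L_off // A0.
have edge : forall k l, k != l -> L k l != 0 -> u mu k - u mu l @[mu --> +oo] --> 0.
  move=> a b ab Lab.
  have Lp : 0 < L a b by rewrite lt_neqAle eq_sym Lab /L L_off // A0.
  apply: (@sq_cvg0 _ _ (2 * K0 / (L a b * theta b))) => mu mu0.
  rewrite ler_pdivlMr ?mulr_gt0 //; apply: le_trans (Qle mu mu0).
  rewrite -mulrA ler_pM2l // mulrC.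
  apply: le_trans (sum_ge1 _ _ a _); last by move=> i; apply: sumr_ge0 => j _; exact: tnn.
  by apply: (sum_ge1 _ (fun j => L a j * theta j * (u mu a - u mu j) ^+ 2) b) => j; exact: tnn.
have allp : forall i j, u mu i - u mu j @[mu --> +oo] --> 0.
  move=> i j; have /connectP [ps hp ->] := irr i j.
  elim: ps i hp => [|x ps IH] i /=.
    by move=> _; under eq_cvg do rewrite subrr; exact: cvg_cst.
  move=> /andP [/andP [ix Lix] hp].
  have e : forall mu, u mu i - u mu (last x ps) = (u mu i - u mu x) + (u mu x - u mu (last x ps)).
    by move=> mu; rewrite addrA subrK.
  under eq_cvg do rewrite e.
  have h := cvgD (edge _ _ ix Lix) (IH x hp); rewrite addr0 in h; exact: h.
move=> i.
set S1 := \sum_j theta j * p j.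
set S2 := \sum_j theta j ^+ 2.
have S2p : 0 < S2.
  apply: lt_le_trans (sum_ge1 _ _ i _); first by rewrite exprn_gt0.
  by move=> j; exact: sqr_ge0.
pose C := fun j => theta j * p j + 2 * M0 * theta j ^+ 2.
apply: (@cvg_bound _ _ _ _ _ (fun mu => theta i / (S2 * m0) * \sum_j C j * `|u mu j - u mu i|)).
  have h : forall j, C j * `|u mu j - u mu i| @[mu --> +oo] --> 0.
    move=> j; have h := cvgMl_tmp (a:=C j) (cvg_norm (allp j i)).
    by rewrite normr0 mulr0 in h; apply: h.
  have h2 := cvgMl_tmp (a:=theta i / (S2 * m0)) (sum_cvg0 _ (fun j mu => C j * `|u mu j - u mu i|) h).
  by rewrite mulr0 in h2; apply: h2.
near=> mu.
have mu0 : 0 < mu by near: mu; apply: nbhs_pinfty_gt; rewrite num_real.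
set U := u mu i.
have Z : \sum_j theta j * u mu j * (p j - theta j * u mu j) = 0.
  have : \sum_j wstar mu j * (p j - wstar mu j) = 0.
    rewrite (eq_bigr (fun j => - (mu * \sum_k L j k * wstar mu k))); last by move=> j _; exact: weq.
    by rewrite sumrN -mulr_sumr Lsum0 mulr0 oppr0.
  by move=> H; rewrite -[RHS]H; apply: eq_bigr => j _; rewrite tu.
have ident : U * (S1 - U * S2) + \sum_j (u mu j - U) * (theta j * p j - theta j ^+ 2 * (u mu j + U)) = 0.
  rewrite -[RHS]Z /S1 /S2 mulrBr !mulr_sumr -sumrB -big_split /=.
  by apply: eq_bigr => j _; ring.
have ident2 : U * (S1 - U * S2) = - \sum_j (u mu j - U) * (theta j * p j - theta j ^+ 2 * (u mu j + U)).
  by apply/eqP; rewrite -addr_eq0 ident.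
have eW : S1 / S2 * theta i - wstar mu i = theta i / S2 * (S1 - U * S2).
  rewrite -(tu mu i) -/U; field; exact: lt0r_neq0.
rewrite eW normrM [`|theta i / S2|]ger0_norm; last by rewrite divr_ge0 // ltW.
have -> : theta i / (S2 * m0) * \sum_j C j * `|u mu j - U| =
          theta i / S2 * ((\sum_j C j * `|u mu j - U|) / m0).
  by field; apply/andP; split; exact: lt0r_neq0.
rewrite ler_wpM2l //; first by rewrite divr_ge0 // ltW.
rewrite ler_pdivlMr //.
apply: (@le_trans _ _ (`|S1 - U * S2| * U)).
  by rewrite ler_wpM2l // lb'.
have U0 : 0 <= U := uge0 mu mu0 i.
rewrite mulrC -{1}(ger0_norm U0) -normrM ident2 normrN.
apply: le_trans (ler_norm_sum _ _ _) _; apply: ler_sum => j _.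
rewrite normrM mulrC ler_wpM2r //.
have h1 := uge0 mu mu0 j; have h2 := ub' mu mu0 j.
have h3 := uge0 mu mu0 i; have h4 := ub' mu mu0 i.
have h5 : 0 <= theta j * p j by rewrite mulr_ge0 // ltW.
have h6 : 0 <= theta j ^+ 2 by exact: sqr_ge0.
have h7 : theta j ^+ 2 * (u mu j + U) <= 2 * M0 * theta j ^+ 2 by rewrite /U; nra.
have h8 : 0 <= theta j ^+ 2 * (u mu j + U) by rewrite /U; nra.
rewrite /C ler_norml; apply/andP; split; lra.
Unshelve. all: by end_near.
Qed.
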